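(* Consider a unitary multi-parameter channel $\rho_0\mapsto U(\theta)\rho_0U(\theta)^\dagger$ on $\mathbb{C}^d$, $\theta=(\theta^1,\dots,\theta^m)\in\mathbb{R}^m$, with $U(\theta)$ unitary and differentiable, and fixed pure input $\rho_0=|\psi_0\rangle\langle\psi_0|$. Let $H(\theta)$ be the SLD quantum information matrix of $\rho_{out}(\theta)=U(\theta)\rho_0U(\theta)^\dagger$ and $C_\Upsilon(\theta)_{jk}=4\,\mathrm{Re}\,\mathrm{tr}\{\frac{\partial U}{\partial\theta^j}\rho_0\frac{\partial U}{\partial\theta^k}^\dagger\}$. Then $H(\theta)=C_\Upsilon(\theta)$ if and only if $\mathrm{tr}\{U(\theta)\rho_0\frac{\partial U(\theta)}{\partial\theta^l}^\dagger\}=0$ for all $l$.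
   Context: The SLD quantum information matrix of a family $\rho(\theta)$ is $H(\theta)_{jk}=\mathrm{Re}\,\mathrm{tr}\{\lambda^{(j)}\rho\lambda^{(k)}\}$, where $\lambda^{(j)}$ is a self-adjoint solution of $\partial\rho/\partial\theta^j=\frac12(\rho\lambda^{(j)}+\lambda^{(j)}\rho)$. For a unitary channel the canonical Kraus representation is the single operator $U(\theta)$, and $C_\Upsilon$ is the corresponding multi-parameter Sarovar–Milburn bound. *)

(* Defs.v *)
From HB Require Import structures.
From mathcomp Require Import all_boot all_order all_algebra.
From mathcomp Require Import all_classical all_reals all_analysis.
From mathcomp Require Import complex.
Set Implicit Arguments. Unset Strict Implicit. Unset Printing Implicit Defensive.
Import Order.TTheory GRing.Theory Num.Theory.
Import numFieldNormedType.Exports.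
Local Open Scope ring_scope.

Definition adj (R : rcfType) (p q : nat) (A : 'M[R[i]]_(p, q)) : 'M[R[i]]_(q, p) :=
  (map_mx (@conjc R) A)^T.

Definition unitary (R : rcfType) (d : nat) (U : 'M[R[i]]_d) : Prop :=
  adj U *m U = 1%:M /\ U *m adj U = 1%:M.

Definition unit_dir (R : realType) (m : nat) (j : 'I_m) : 'rV[R]_m := delta_mx 0 j.
Arguments unit_dir : clear implicits.
Arguments unit_dir R [m] j.

Definition is_partial (R : realType) (m d : nat) (F : 'rV[R]_m -> 'M[R[i]]_d)
  (j : 'I_m) (theta : 'rV[R]_m) (D : 'M[R[i]]_d) : Prop :=
  forall a b : 'I_d,
    is_derive (0 : R) (1 : R)
      (fun t : R => complex.Re (F (theta + t *: unit_dir R j) a b)) (complex.Re (D a b)) /\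
    is_derive (0 : R) (1 : R)
      (fun t : R => complex.Im (F (theta + t *: unit_dir R j) a b)) (complex.Im (D a b)).

Definition rho_out (R : realType) (m d : nat) (U : 'rV[R]_m -> 'M[R[i]]_d)
  (rho0 : 'M[R[i]]_d) (theta : 'rV[R]_m) : 'M[R[i]]_d :=
  U theta *m rho0 *m adj (U theta).

Definition is_SLD (R : realType) (m d : nat) (rho : 'rV[R]_m -> 'M[R[i]]_d)
  (j : 'I_m) (theta : 'rV[R]_m) (lam : 'M[R[i]]_d) : Prop :=
  adj lam = lam /\
  is_partial rho j theta (2%:R^-1 *: (rho theta *m lam + lam *m rho theta)).

Definition SLD_info (R : realType) (d : nat) (rho : 'M[R[i]]_d)
  (lam1 lam2 : 'M[R[i]]_d) : R :=
  complex.Re (\tr (lam1 *m rho *m lam2)).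

Definition C_Upsilon (R : realType) (d : nat) (rho0 dUj dUk : 'M[R[i]]_d) : R :=
  4%:R * complex.Re (\tr (dUj *m rho0 *m adj dUk)).

(* Main.v *)
Require Import Defs.
From HB Require Import structures.
From mathcomp Require Import all_boot all_order all_algebra.
From mathcomp Require Import all_classical all_reals all_analysis.
From mathcomp Require Import complex.
From mathcomp Require Import ring lra.
Import Order.TTheory GRing.Theory Num.Theory.
Import numFieldNormedType.Exports.
Local Open Scope ring_scope.

Section CD.
Variable R : realType.

Definition cd (f : R -> R[i]) (v : R[i]) : Prop :=
  is_derive (0:R) (1:R) (fun t => complex.Re (f t)) (complex.Re v) /\
  is_derive (0:R) (1:R) (fun t => complex.Im (f t)) (complex.Im v).

Lemma cd_eq f v w : cd f v -> v = w -> cd f w.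
Proof. by move=> ? <-. Qed.

Lemma cd_ext f g v : (forall t, f t = g t) -> cd f v -> cd g v.
Proof.
move=> fg; have -> : g = f by apply: funext => t; rewrite fg.
done.
Qed.

Lemma cd_cst c : cd (fun _ => c) 0.
Proof. by split; apply: is_derive_cst. Qed.

Lemma cd_add f g v w : cd f v -> cd g w -> cd (fun t => f t + g t) (v + w).
Proof.
move=> [f1 f2] [g1 g2]; split.
- have -> : (fun t => complex.Re (f t + g t)) =
     (fun t => complex.Re (f t)) + (fun t => complex.Re (g t)).
    by rewrite !fctE; apply: funext => t; case: (f t) => ? ?; case: (g t).
  apply: is_derive_eq (is_deriveD f1 g1) _.
  by case: v {f1 f2} => ? ?; case: w {g1 g2}=> ? ?.
- have -> : (fun t => complex.Im (f t + g t)) =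
     (fun t => complex.Im (f t)) + (fun t => complex.Im (g t)).
    by rewrite !fctE; apply: funext => t; case: (f t) => ? ?; case: (g t).
  apply: is_derive_eq (is_deriveD f2 g2) _.
  by case: v {f1 f2} => ? ?; case: w {g1 g2}=> ? ?.
Qed.

Lemma cd_mul f g v w : cd f v -> cd g w ->
  cd (fun t => f t * g t) (v * g 0 + f 0 * w).
Proof.
move=> [f1 f2] [g1 g2]; split.
- have -> : (fun t => complex.Re (f t * g t)) =
     (fun t => complex.Re (f t)) * (fun t => complex.Re (g t)) -
     (fun t => complex.Im (f t)) * (fun t => complex.Im (g t)).
    by rewrite !fctE; apply: funext => t; case: (f t) => ? ?; case: (g t).
  apply: is_derive_eq (is_deriveB (is_deriveM f1 g1) (is_deriveM f2 g2)) _.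
  clear f1 f2 g1 g2; rewrite /=; move: (f 0) (g 0) v w => [a b] [c e] [p q] [r s] /=.
  rewrite /GRing.scale /=; ring.
- have -> : (fun t => complex.Im (f t * g t)) =
     (fun t => complex.Re (f t)) * (fun t => complex.Im (g t)) +
     (fun t => complex.Im (f t)) * (fun t => complex.Re (g t)).
    by rewrite !fctE; apply: funext => t; case: (f t) => ? ?; case: (g t).
  apply: is_derive_eq (is_deriveD (is_deriveM f1 g2) (is_deriveM f2 g1)) _.
  clear f1 f2 g1 g2; rewrite /=; move: (f 0) (g 0) v w => [a b] [c e] [p q] [r s] /=.
  rewrite /GRing.scale /=; ring.
Qed.

Lemma cd_conj f v : cd f v -> cd (fun t => conjc (f t)) (conjc v).
Proof.
move=> [f1 f2]; split.
- have -> : (fun t => complex.Re (conjc (f t))) = (fun t => complex.Re (f t)).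
    by apply: funext => t; case: (f t).
  by move: f1; case: v {f2}.
- have -> : (fun t => complex.Im (conjc (f t))) = - (fun t => complex.Im (f t)).
    by rewrite !fctE; apply: funext => t; case: (f t).
  apply: is_derive_eq (is_deriveN f2) _.
  by case: v {f1 f2} => ? ?.
Qed.

Lemma cd_unique f v w : cd f v -> cd f w -> v = w.
Proof.
move=> [f1 f2] [g1 g2].
have e1 := @derive_val _ _ _ _ _ _ _ f1; have e2 := @derive_val _ _ _ _ _ _ _ g1.
have e3 := @derive_val _ _ _ _ _ _ _ f2; have e4 := @derive_val _ _ _ _ _ _ _ g2.
move: e1 e2 e3 e4; case: v {f1 f2} => ? ?; case: w {g1 g2} => ? ? /=.
by move=> -> -> -> ->.
Qed.

Lemma cd_sum n (F : 'I_n -> R -> R[i]) (v : 'I_n -> R[i]) :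
  (forall i, cd (F i) (v i)) -> cd (fun t => \sum_(i < n) F i t) (\sum_(i < n) v i).
Proof.
elim: n F v => [|n IH] F v H.
  rewrite big_ord0; apply: (@cd_ext (fun _ => 0)); first by move=> t; rewrite big_ord0.
  exact: cd_cst.
rewrite big_ord_recr /=.
apply: (@cd_ext (fun t => \sum_(i < n) F (widen_ord (leqnSn n) i) t + F ord_max t)).
  by move=> t; rewrite big_ord_recr.
apply: cd_add (H ord_max).
exact: (IH (fun i => F (widen_ord (leqnSn n) i))).
Qed.
Definition cdM p q (F : R -> 'M[R[i]]_(p,q)) (D : 'M[R[i]]_(p,q)) :=
  forall a b, cd (fun t => F t a b) (D a b).
Arguments cdM {p q}.

Lemma cdM_mul p q r (F : R -> 'M[R[i]]_(p,q)) (G : R -> 'M[R[i]]_(q,r)) D E :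
  cdM F D -> cdM G E -> cdM (fun t => F t *m G t) (D *m G 0 + F 0 *m E).
Proof.
move=> HF HG a b.
apply: (@cd_ext (fun t => \sum_(c < q) F t a c * G t c b)).
  by move=> t; rewrite !mxE.
apply: cd_eq; first by apply: cd_sum => c; apply: cd_mul.
by rewrite !mxE -big_split.
Qed.

Lemma cdM_cst p q (B : 'M[R[i]]_(p,q)) : cdM (fun _ => B) 0.
Proof. by move=> a b; rewrite mxE; apply: cd_cst. Qed.

Lemma cdM_adj p q (F : R -> 'M[R[i]]_(p,q)) D :
  cdM F D -> cdM (fun t => adj (F t)) (adj D).
Proof.
move=> HF a b; rewrite /adj !mxE.
apply: (@cd_ext (fun t => conjc (F t b a))); first by move=> t; rewrite !mxE.
exact: cd_conj.
Qed.

Lemma cd_tr p (F : R -> 'M[R[i]]_p) D : cdM F D -> cd (fun t => \tr (F t)) (\tr D).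
Proof. by move=> HF; apply: cd_sum => c; apply: HF. Qed.

Lemma cdM_unique p q (F : R -> 'M[R[i]]_(p,q)) D E : cdM F D -> cdM F E -> D = E.
Proof. by move=> H1 H2; apply/matrixP => a b; apply: cd_unique (H1 a b) (H2 a b). Qed.
End CD.
Arguments cd {R}.
Arguments cdM {R p q}.
Arguments cd_eq {R}. Arguments cd_ext {R}. Arguments cd_cst {R}. Arguments cd_add {R}.
Arguments cd_mul {R}. Arguments cd_conj {R}. Arguments cd_unique {R f v w}. Arguments cd_sum {R}.
Arguments cdM_mul {R p q r F G D E}. Arguments cdM_cst {R p q}. Arguments cdM_adj {R p q F D}.
Arguments cd_tr {R p F D}. Arguments cdM_unique {R p q F D E}.

Section Adj.
Variable R : rcfType.
Implicit Types a : R[i].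

Lemma adjM p q r (A : 'M[R[i]]_(p,q)) (B : 'M[R[i]]_(q,r)) :
  adj (A *m B) = adj B *m adj A.
Proof. by rewrite /adj map_mxM trmx_mul. Qed.

Lemma adjK p q (A : 'M[R[i]]_(p,q)) : adj (adj A) = A.
Proof. by apply/matrixP => a b; rewrite /adj !mxE conjcK. Qed.

Lemma adjD p q (A B : 'M[R[i]]_(p,q)) : adj (A + B) = adj A + adj B.
Proof. by apply/matrixP => a b; rewrite /adj !mxE rmorphD. Qed.

Lemma adjN p q (A : 'M[R[i]]_(p,q)) : adj (- A) = - adj A.
Proof. by apply/matrixP => a b; rewrite /adj !mxE rmorphN. Qed.

Lemma adjZ p q a (A : 'M[R[i]]_(p,q)) : adj (a *: A) = conjc a *: adj A.
Proof. by apply/matrixP => i j; rewrite /adj !mxE rmorphM. Qed.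

Lemma adj_scalar n a : adj (a%:M : 'M[R[i]]_n) = (conjc a)%:M.
Proof.
apply/matrixP => i j; rewrite /adj !mxE; case: (i =P j) => [->|/eqP ne]; first by rewrite eqxx !mulr1n.
by rewrite eq_sym (negbTE ne) !mulr0n rmorph0.
Qed.

Lemma tr_adj n (A : 'M[R[i]]_n) : \tr (adj A) = conjc (\tr A).
Proof. rewrite /adj mxtrace_tr /mxtrace rmorph_sum; apply: eq_bigr => i _; by rewrite mxE. Qed.

Lemma conj2 : conjc (2%:R : R[i]) = 2%:R.
Proof. exact: conjc_nat. Qed.

Lemma ReD (x y : R[i]) : complex.Re (x + y) = complex.Re x + complex.Re y.
Proof. by case: x; case: y. Qed.

Lemma ReMn (n : nat) (z : R[i]) : complex.Re (n%:R * z) = n%:R * complex.Re z.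
Proof.
have -> : (n%:R : R[i]) = real_complex R (n%:R : R) by rewrite rmorph_nat.
by case: z => a b /=; rewrite mul0r subr0.
Qed.

Lemma im_zero (z : R[i]) : conjc z + z = 0 -> complex.Re (z * z) = 0 -> z = 0.
Proof.
case: z => x y /= [] h1 h2 h3.
have hx : x = 0 by lra.
subst x; have hy : y * y = 0 by lra.
by move: hy => /eqP; rewrite mulf_eq0 orbb => /eqP ->.
Qed.

Lemma two_neq0 : (2%:R : R[i]) != 0.
Proof. by rewrite pnatr_eq0. Qed.

Lemma core d (psi phi : 'cV[R[i]]_d) (lam D : 'M[R[i]]_d) :
  adj psi *m psi = 1%:M ->
  adj psi *m phi + adj phi *m psi = 0 ->
  D = phi *m adj psi + psi *m adj phi ->
  D = 2%:R^-1 *: (psi *m adj psi *m lam + lam *m (psi *m adj psi)) ->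
  lam *m psi = 2%:R *: (phi + psi *m (adj phi *m psi)).
Proof.
move=> hpsi h0 eD1 eD2.
have Dpsi1 : D *m psi = phi + psi *m (adj phi *m psi).
  by rewrite eD1 mulmxDl -!mulmxA hpsi mulmx1.
have Dpsi2 : D *m psi = 2%:R^-1 *: (psi *m (adj psi *m (lam *m psi)) + lam *m psi).
  by rewrite eD2 -scalemxAl mulmxDl -!mulmxA hpsi mulmx1.
have s0 : adj psi *m (lam *m psi) = 0.
  have e1 : adj psi *m (D *m psi) = adj psi *m (lam *m psi).
    rewrite Dpsi2 -scalemxAr mulmxDr (mulmxA (adj psi) psi) hpsi mul1mx -mulr2n -scalerMnr scalerMnl -mulr_natr.
    by rewrite mulVf ?scale1r // two_neq0.
  by rewrite -e1 Dpsi1 mulmxDr (mulmxA (adj psi) psi) hpsi mul1mx.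
by rewrite -Dpsi1 Dpsi2 s0 mulmx0 add0r scalerA divff ?scale1r // two_neq0.
Qed.

Lemma info d (psi phij phik : 'cV[R[i]]_d) (lamj lamk : 'M[R[i]]_d) :
  adj psi *m psi = 1%:M ->
  adj psi *m phij = - (adj phij *m psi) ->
  adj psi *m phik = - (adj phik *m psi) ->
  adj lamk = lamk ->
  lamj *m psi = 2%:R *: (phij + psi *m (adj phij *m psi)) ->
  lamk *m psi = 2%:R *: (phik + psi *m (adj phik *m psi)) ->
  \tr (lamj *m (psi *m adj psi) *m lamk) =
    4%:R * (\tr (adj phik *m phij) + \tr ((adj phik *m psi) *m (adj phij *m psi))).
Proof.
move=> hpsi hj hk' hk xj xk.
rewrite (mulmxA lamj psi) -(mulmxA (lamj *m psi)) mxtrace_mulC -{1}hk -adjM xk xj.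
rewrite adjZ conj2 adjD !adjM adjK hk'.
set aj := adj phij *m psi; set ak := adj phik *m psi.
have E : (adj phik + (-ak) *m adj psi) *m (phij + psi *m aj) = adj phik *m phij + ak *m aj.
  rewrite mulmxDl !mulmxDr mulmxA -[(- ak) *m adj psi *m phij]mulmxA hj.
  rewrite -[(-ak) *m adj psi *m (psi *m aj)]mulmxA (mulmxA (adj psi) psi) hpsi mul1mx.
  by rewrite mulmxN !mulNmx opprK subrr addr0.
rewrite -scalemxAl -scalemxAr scalerA E.
by rewrite mxtraceZ mxtraceD -natrM.
Qed.

Lemma tr11M (A B : 'M[R[i]]_1) : \tr (A *m B) = A 0 0 * B 0 0.
Proof. by rewrite trace_mx11 mxE big_ord1. Qed.

Lemma mx11_eq0 (A B : 'M[R[i]]_1) : \tr A + \tr B = 0 -> A + B = 0.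
Proof.
move=> h; rewrite (mx11_scalar (A + B)) mxE -!trace_mx11 h.
by apply/matrixP => i j; rewrite !mxE mul0rn.
Qed.
Lemma conj_rel (A : 'M[R[i]]_1) : adj A + A = 0 -> conjc (A 0 0) + A 0 0 = 0.
Proof. by move/matrixP/(_ 0 0); rewrite !mxE. Qed.
End Adj.
Arguments info {R d psi phij phik lamj lamk}. Arguments im_zero {R z}.

Theorem lemma10 (R : realType) (m d : nat)
  (U : 'rV[R]_m -> 'M[R[i]]_d) (dU : 'I_m -> 'M[R[i]]_d)
  (psi0 : 'cV[R[i]]_d) (theta : 'rV[R]_m)
  (lam : 'I_m -> 'M[R[i]]_d) :
  (forall th, unitary (U th)) ->
  (forall l, is_partial U l theta (dU l)) ->
  adj psi0 *m psi0 = 1%:M ->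
  (forall j, is_SLD (rho_out U (psi0 *m adj psi0)) j theta (lam j)) ->
  ((forall j k : 'I_m,
      SLD_info (rho_out U (psi0 *m adj psi0) theta) (lam j) (lam k)
      = C_Upsilon (psi0 *m adj psi0) (dU j) (dU k))
   <->
   (forall l : 'I_m, \tr (U theta *m (psi0 *m adj psi0) *m adj (dU l)) = 0)).
Proof.
move=> hunit hpart hpsi0 hSLD.
set P := psi0 *m adj psi0.
set psi := U theta *m psi0.
have hpsi : adj psi *m psi = 1%:M.
  by rewrite adjM mulmxA -(mulmxA (adj psi0)) (proj1 (hunit theta)) mulmx1 hpsi0.
have rhoE : rho_out U P theta = psi *m adj psi by rewrite /rho_out adjM !mulmxA.
pose phi l := dU l *m psi0.
have key l : adj psi *m phi l + adj (phi l) *m psi = 0 /\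
    lam l *m psi = 2%:R *: (phi l + psi *m (adj (phi l) *m psi)).
  pose e := @unit_dir R m l.
  have hU : cdM (fun t => U (theta + t *: e)) (dU l) := hpart l.
  have hr := cdM_mul (cdM_mul hU (cdM_cst P)) (cdM_adj hU).
  rewrite scale0r addr0 mulmx0 addr0 in hr.
  have [_ hD] := hSLD l.
  have eD := cdM_unique
     (hD : cdM (fun t => U (theta + t *: e) *m P *m adj (U (theta + t *: e))) _) hr.
  have eDphi : dU l *m P *m adj (U theta) + U theta *m P *m adj (dU l)
      = phi l *m adj psi + psi *m adj (phi l).
    by rewrite /phi /psi /P !adjM !mulmxA.
  have htr : \tr (dU l *m P *m adj (U theta) + U theta *m P *m adj (dU l)) = 0.
    apply: (cd_unique (cd_tr hr)).
    apply: (@cd_ext _ (fun _ => 1)); last exact: cd_cst.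
    move=> t; rewrite mxtrace_mulC mulmxA (proj1 (hunit _)) mul1mx /P mxtrace_mulC hpsi0.
    by rewrite mxtrace1.
  have h0 : adj psi *m phi l + adj (phi l) *m psi = 0.
    apply: mx11_eq0; rewrite mxtrace_mulC (mxtrace_mulC (adj (phi l))) -mxtraceD.
    by rewrite -eDphi.
  split => //.
  apply: core h0 _ _ => //.
  by rewrite -rhoE eD eDphi.
have hj l : adj psi *m phi l = - (adj (phi l) *m psi).
  by apply/eqP; rewrite -addr_eq0 (proj1 (key l)).
pose al l := (adj (phi l) *m psi) 0 0.
have hconj l : conjc (al l) + al l = 0.
  apply: conj_rel; have h := proj1 (key l).
  by rewrite adjM adjK.
have trU l : \tr (U theta *m P *m adj (dU l)) = al l.
  rewrite /P (mulmxA (U theta)) -(mulmxA psi) mxtrace_mulC -adjM trace_mx11 //.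
have HI j k : SLD_info (rho_out U P theta) (lam j) (lam k) =
    C_Upsilon P (dU j) (dU k) + 4%:R * complex.Re (al k * al j).
  rewrite /SLD_info rhoE (info hpsi (hj j) (hj k) (proj1 (hSLD k)) (proj2 (key j)) (proj2 (key k))).
  rewrite ReMn ReD mulrDr tr11M /C_Upsilon; congr (_ * complex.Re _ + _).
  by rewrite /P /phi (mulmxA (dU j)) -(mulmxA (dU j *m psi0)) -adjM [RHS]mxtrace_mulC.
split.
- move=> H l; rewrite trU.
  have e : 4%:R * complex.Re (al l * al l) = 0.
    by apply: (@addrI _ (C_Upsilon P (dU l) (dU l))); rewrite addr0 -HI H.
  move/eqP: e; rewrite mulf_eq0 pnatr_eq0 /= => /eqP e.
  exact: im_zero (hconj l) e.
- move=> H j k; rewrite HI.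
  have -> : al k = 0 by rewrite -trU H.
  by rewrite mul0r /= mulr0 addr0.
Qed.
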